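(* Let $N_1,N_2,N_3\ge0$ be integers and $\Phi\in P(N_1,N_2,N_3)$. Suppose the kernel of $A(N_1,N_2,N_3)$ has dimension $\nu_A=1$. Then every $f\in D_A$ is an extremal polynomial in the class $Q(N_1,N_2,N_3)$.
   Context: For integers $N_1,N_2,N_3\ge0$, $\sigma(N_1,N_2,N_3)$ is the set of trigonometric polynomials $f(\alpha,\beta,\gamma)=\sum_{|k|\le N_1}\sum_{|\ell|\le N_2}\sum_{|m|\le N_3} q(k,\ell,m)e^{i(k\alpha+\ell\beta+m\gamma)}$ with $f\ge0$ for all real $\alpha,\beta,\gamma$; $Q(N_1,N_2,N_3)$ is the set of $f\in\sigma(N_1,N_2,N_3)$ of the form $f=\sum_{j=1}^r|F_j|^2$ with $F_j=\sum_{0\le k\le N_1,0\le\ell\le N_2,0\le m\le N_3}q_j(k,\ell,m)e^{i(k\alpha+\ell\beta+m\gamma)}$. Let $S=\{(k,\ell,m)\in\mathbb Z^3:0\le k\le N_1,0\le\ell\le N_2,0\le m\le N_3\}$, $\Delta=S-S$. $P(N_1,N_2,N_3)$ is the class of $\Phi:\Delta\to\mathbb C$ with $\sum_{i,j}\xi_i\bar\xi_j\Phi(x_i-x_j)\ge0$ for all $x_i\in S$, $\xi_i\in\mathbb C$. $A(N_1,N_2,N_3)$ is the matrix indexed by $S\times S$ with entry $\Phi(y-x)$ in row $x$, column $y$; $\nu_A$ is the dimension of its (complex) kernel. For a vector $e=(e(x))_{x\in S}$ put $F_e(\alpha,\beta,\gamma)=\sum_{(k,\ell,m)\in S}e(k,\ell,m)e^{i(k\alpha+\ell\beta+m\gamma)}$.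 $D_A$ is the convex hull of the polynomials $|F_e|^2$ with $e\ne0$ in the kernel of $A(N_1,N_2,N_3)$. An element $f$ of a convex cone $U$ is called extremal in $U$ if whenever $f=g+h$ with $g,h\in U$, both $g$ and $h$ are nonnegative multiples of $f$. *)

(* Defs.v *)
From HB Require Import structures.
From mathcomp Require Import all_boot all_order all_algebra.
From mathcomp Require Import complex.
From mathcomp Require Import all_classical all_reals all_analysis.
Set Implicit Arguments. Unset Strict Implicit. Unset Printing Implicit Defensive.
Import Order.TTheory GRing.Theory Num.Theory.
Local Open Scope ring_scope.
Local Open Scope complex_scope.

Section Defs.
Variable R : realType.
Local Notation C := R[i].

Definition expi (t : R) : C := (cos t +i* sin t)%C.

Definition chi (k l m : int) (a b c : R) : C :=
  expi (k%:~R * a + l%:~R * b + m%:~R * c).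

(* trigonometric polynomials in 3 variables are represented by their values *)
Definition trigfun := R -> R -> R -> C.

Definition sigmaN (N1 N2 N3 : nat) (f : trigfun) : Prop :=
  (exists q : int -> int -> int -> C,
     forall a b c : R,
       f a b c = \sum_(k < (N1.*2).+1) \sum_(l < (N2.*2).+1) \sum_(m < (N3.*2).+1)
                   q (k%:Z - N1%:Z)%R (l%:Z - N2%:Z)%R (m%:Z - N3%:Z)%R
                   * chi (k%:Z - N1%:Z)%R (l%:Z - N2%:Z)%R (m%:Z - N3%:Z)%R a b c)
  /\ (forall a b c : R, 0 <= f a b c).

Definition Sidx (N1 N2 N3 : nat) : finType := ('I_N1.+1 * 'I_N2.+1 * 'I_N3.+1)%type.

Definition sk N1 N2 N3 (x : Sidx N1 N2 N3) : int := (nat_of_ord x.1.1)%:Z.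
Definition sl N1 N2 N3 (x : Sidx N1 N2 N3) : int := (nat_of_ord x.1.2)%:Z.
Definition sm N1 N2 N3 (x : Sidx N1 N2 N3) : int := (nat_of_ord x.2)%:Z.

Definition Fpoly N1 N2 N3 (q : Sidx N1 N2 N3 -> C) : trigfun :=
  fun a b c => \sum_(x : Sidx N1 N2 N3) q x * chi (sk x) (sl x) (sm x) a b c.

Definition QN (N1 N2 N3 : nat) (f : trigfun) : Prop :=
  sigmaN N1 N2 N3 f /\
  exists (r : nat) (q : 'I_r -> Sidx N1 N2 N3 -> C),
    forall a b c : R, f a b c = \sum_(j < r) `|Fpoly (q j) a b c| ^+ 2.

(* Phi : Delta -> C is represented as a function on Z^3 (only values on
   Delta = S - S matter). *)
Definition diffk N1 N2 N3 (x y : Sidx N1 N2 N3) : int * int * int :=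
  ((sk x - sk y)%R, (sl x - sl y)%R, (sm x - sm y)%R).

Definition PN (N1 N2 N3 : nat) (Phi : int * int * int -> C) : Prop :=
  forall (n : nat) (x : 'I_n -> Sidx N1 N2 N3) (xi : 'I_n -> C),
    0 <= \sum_(i < n) \sum_(j < n) xi i * (xi j)^* * Phi (diffk (x i) (x j)).

Definition Amx N1 N2 N3 (Phi : int * int * int -> C) : 'M[C]_#|Sidx N1 N2 N3| :=
  \matrix_(i, j) Phi (diffk (enum_val j) (enum_val i)).

Definition in_kerA N1 N2 N3 (Phi : int * int * int -> C) (e : 'cV[C]_#|Sidx N1 N2 N3|) : Prop :=
  Amx N1 N2 N3 Phi *m e = 0.

(* nu_A = dimension of the kernel {e | A e = 0}; kermx M is the row kernel
   {u | u M = 0}, so the column kernel of A is (transposed) kermx A^T *)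
Definition nuA N1 N2 N3 (Phi : int * int * int -> C) : nat :=
  \rank (kermx (Amx N1 N2 N3 Phi)^T).

Definition Fe N1 N2 N3 (e : 'cV[C]_#|Sidx N1 N2 N3|) : trigfun :=
  Fpoly (fun x => e (enum_rank x) 0).

Definition DA N1 N2 N3 (Phi : int * int * int -> C) (f : trigfun) : Prop :=
  exists (n : nat) (lam : 'I_n -> R) (e : 'I_n -> 'cV[C]_#|Sidx N1 N2 N3|),
    (forall i, 0 <= lam i) /\ \sum_(i < n) lam i = 1 /\
    (forall i, e i != 0 /\ in_kerA Phi (e i)) /\
    forall a b c : R, f a b c = \sum_(i < n) (lam i)%:C * `|Fe (e i) a b c| ^+ 2.

Definition extremal (U : trigfun -> Prop) (f : trigfun) : Prop :=
  U f /\
  forall g h : trigfun, U g -> U h ->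
    (forall a b c, f a b c = g a b c + h a b c) ->
    (exists s : R, 0 <= s /\ forall a b c, g a b c = s%:C * f a b c) /\
    (exists t : R, 0 <= t /\ forall a b c, h a b c = t%:C * f a b c).

End Defs.

(* Main.v *)
Require Import Defs.
From HB Require Import structures.
From mathcomp Require Import all_boot all_order all_algebra.
From mathcomp Require Import ring lra zify.
From mathcomp Require Import complex.
From mathcomp Require Import all_classical all_reals all_analysis.
Set Implicit Arguments. Unset Strict Implicit. Unset Printing Implicit Defensive.
Import Order.TTheory GRing.Theory Num.Theory.
Local Open Scope ring_scope.
Local Open Scope complex_scope.

Section S.
Variable R : realType.
Local Notation C := R[i].

Lemma expiD (x y : R) : expi (x + y) = expi x * expi y.
Proof. rewrite /expi cosD sinD; simpc. congr (_ +i* _); ring. Qed.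

Lemma expi0 : expi 0 = 1 :> C.
Proof. by rewrite /expi cos0 sin0. Qed.

Lemma conjE (x : C) : Num.conj x = conjc x.
Proof. reflexivity. Qed.

Lemma expiJ (x : R) : Num.conj (expi x) = expi (- x).
Proof. by rewrite conjE /expi cosN sinN. Qed.

Lemma expi_pi : expi pi = -1 :> C.
Proof. by rewrite /expi cospi sinpi; simpc. Qed.

Lemma expi_neq0 (x : R) : expi x != 0 :> C.
Proof.
apply/negP => /eqP H.
have := cos2Dsin2 x. move: H; rewrite /expi => -[-> ->]. rewrite expr0n /= addr0 => H; by move: (oner_neq0 R); rewrite -H eqxx.
Qed.
Definition chi3 (t : int * int * int) (a b c : R) : C := chi t.1.1 t.1.2 t.2 a b c.

Lemma chiMJ k l m k' l' m' (a b c : R) :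
  chi k l m a b c * Num.conj (chi k' l' m' a b c) = chi (k - k') (l - l') (m - m') a b c.
Proof. rewrite /chi expiJ -expiD; congr expi; rewrite !intrB; ring. Qed.

Lemma chi3D t (a b c a' b' c' : R) :
  chi3 t (a + a') (b + b') (c + c') = chi3 t a b c * chi3 t a' b' c'.
Proof. rewrite /chi3 /chi -expiD; congr expi; ring. Qed.

Lemma chi30 t : chi3 t 0 0 0 = 1.
Proof. by rewrite /chi3 /chi !mulr0 !addr0 expi0. Qed.

Lemma expi_sep (k k' : int) : k != k' ->
  expi (k%:~R * (pi / (k - k')%:~R)) = - expi (k'%:~R * (pi / (k - k')%:~R)) :> C.
Proof.
move=> kk.
have nz : (k - k')%:~R != 0 :> R by rewrite intr_eq0 subr_eq0.
have -> : k%:~R * (pi / (k - k')%:~R) = k'%:~R * (pi / (k - k')%:~R) + pi :> R.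
  rewrite -[X in _ = _ + X](divfK nz) (mulrC _ (_%:~R)) -mulrDl; congr (_ * _).
  rewrite intrB; ring.
by rewrite expiD expi_pi mulrN1.
Qed.

Lemma neg_neq (z : C) : z != 0 -> - z != z.
Proof.
move=> nz; apply/negP => /eqP H.
have : z *+ 2 = 0 by rewrite mulr2n -{1}H addNr.
move/eqP; by rewrite -mulr_natl mulf_eq0 pnatr_eq0 /= (negPf nz).
Qed.

Lemma chi3_sep t t' : t != t' -> exists a b c, chi3 t a b c != chi3 t' a b c.
Proof.
case: t => [[k l] m]; case: t' => [[k' l'] m'] /= ne.
have [kk|kk] := eqVneq k k'; last first.
  exists (pi / (k - k')%:~R), 0, 0; rewrite /chi3 /chi /= !mulr0 !addr0 expi_sep //.
  exact: neg_neq (expi_neq0 _).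
have [ll|ll] := eqVneq l l'; last first.
  exists 0, (pi / (l - l')%:~R), 0; rewrite /chi3 /chi /= !mulr0 !add0r !addr0 expi_sep //.
  exact: neg_neq (expi_neq0 _).
have [mm|mm] := eqVneq m m'; last first.
  exists 0, 0, (pi / (m - m')%:~R); rewrite /chi3 /chi /= !mulr0 !add0r expi_sep //.
  exact: neg_neq (expi_neq0 _).
by move: ne; rewrite kk ll mm eqxx.
Qed.
Local Notation Z3 := (int * int * int)%type.

Lemma indep_seq (s : seq Z3) (Cf : Z3 -> C) : uniq s ->
  (forall a b c, \sum_(t <- s) Cf t * chi3 t a b c = 0) -> forall t, t \in s -> Cf t = 0.
Proof.
elim: s Cf => [|t0 s IH] Cf //= /andP[t0s us] H.
have Hs : forall t, t \in s -> Cf t = 0.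
  move=> t ts.
  have ne : t != t0 by apply: contraNneq t0s => <-.
  have [a' [b' [c' hne]]] := chi3_sep ne.
  pose Cf' u := Cf u * (chi3 u a' b' c' - chi3 t0 a' b' c').
  have hyp : forall a b c, \sum_(u <- s) Cf' u * chi3 u a b c = 0.
    move=> a b c.
    have h1 : \sum_(u <- t0 :: s) Cf u * chi3 u a b c * chi3 u a' b' c' = 0.
      by rewrite -[RHS](H (a + a') (b + b') (c + c')); apply: eq_bigr => u _; rewrite chi3D mulrA.
    move: h1 (H a b c); rewrite !big_cons => h1 h2.
    rewrite (eq_bigr (fun u => Cf u * chi3 u a b c * chi3 u a' b' c'
                - chi3 t0 a' b' c' * (Cf u * chi3 u a b c))); last by move=> u _; rewrite /Cf'; ring.
    rewrite sumrB -mulr_sumr.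
    have e1 : \sum_(u <- s) Cf u * chi3 u a b c * chi3 u a' b' c'
              = - (Cf t0 * chi3 t0 a b c * chi3 t0 a' b' c').
      by apply/eqP; rewrite -addr_eq0 addrC h1.
    have e2 : \sum_(u <- s) Cf u * chi3 u a b c = - (Cf t0 * chi3 t0 a b c).
      by apply/eqP; rewrite -addr_eq0 addrC h2.
    rewrite e1 e2; ring.
  have /eqP := IH Cf' us hyp t ts.
  by rewrite /Cf' mulf_eq0 subr_eq0 (negPf hne) orbF => /eqP.
move=> t; rewrite inE => /orP[/eqP ->|]; last exact: Hs.
have := H 0 0 0; rewrite big_cons chi30 mulr1 big_seq big1 ?addr0 // => u us'.
by rewrite Hs // mul0r.
Qed.

Lemma regroup (I : finType) (cf : I -> C) (d : I -> Z3) (G : Z3 -> C) :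
  \sum_i cf i * G (d i) =
  \sum_(t <- undup (map d (enum I))) (\sum_(i | d i == t) cf i) * G t.
Proof.
have us := undup_uniq (map d (enum I)).
under [RHS]eq_bigr => t _ do rewrite mulr_suml big_mkcond.
rewrite exchange_big /=; apply: eq_bigr => i _.
have di : d i \in undup (map d (enum I)) by rewrite mem_undup map_f ?mem_enum.
rewrite (big_rem _ di) eqxx big1_seq; first by rewrite /= addr0.
move=> t /andP[_ tr].
case: eqP => // dt; move: tr; rewrite -dt mem_rem_uniqF //.
Qed.

Lemma indep (I : finType) (cf : I -> C) (d : I -> Z3) :
  (forall a b c, \sum_i cf i * chi3 (d i) a b c = 0) ->
  forall psi : Z3 -> C, \sum_i cf i * psi (d i) = 0.
Proof.
move=> H psi; rewrite regroup big_seq big1 // => t ts.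
rewrite (@indep_seq _ (fun t => \sum_(i | d i == t) cf i) (undup_uniq _) _ t ts) ?mul0r //.
by move=> a b c; rewrite -regroup.
Qed.

Lemma sumdelta (N : nat) (a : int) : (- (N%:Z) <= a <= N%:Z)%R ->
  \sum_(k < (N.*2).+1) (if a == k%:Z - N%:Z then 1 else 0 : C) = 1.
Proof.
move=> /andP[h1 h2].
have k0lt : (absz (a + N%:Z)%R < (N.*2).+1)%N by lia.
rewrite (bigD1 (Ordinal k0lt)) //= ifT; last by apply/eqP; lia.
rewrite big1 ?addr0 // => k kne; case: ifP => // /eqP ha.
have ek : k = Ordinal k0lt by apply/val_inj => /=; lia.
by move: kne; rewrite ek eqxx.
Qed.

Lemma term_delta (t1 t2 t3 k l m : int) (X : C) (a b c : R) :
  (if (t1, t2, t3) == (k, l, m) then X else 0) * chi k l m a b c =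
  (if t1 == k then 1 else 0) * ((if t2 == l then 1 else 0) *
     ((if t3 == m then 1 else 0) * (X * chi t1 t2 t3 a b c))).
Proof.
rewrite !xpair_eqE.
by case: eqP => [->|]; case: eqP => [->|]; case: eqP => [->|] /=; rewrite ?mul0r ?mul1r ?mulr0.
Qed.

Lemma tri_delta (N1 N2 N3 : nat) (t1 t2 t3 : int) (Y : int -> int -> int -> C) :
  (- (N1%:Z) <= t1 <= N1%:Z)%R -> (- (N2%:Z) <= t2 <= N2%:Z)%R -> (- (N3%:Z) <= t3 <= N3%:Z)%R ->
  \sum_(k < (N1.*2).+1) \sum_(l < (N2.*2).+1) \sum_(m < (N3.*2).+1)
     (if t1 == k%:Z - N1%:Z then 1 else 0) * ((if t2 == l%:Z - N2%:Z then 1 else 0) *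
     ((if t3 == m%:Z - N3%:Z then 1 else 0) * (Y t1 t2 t3))) = Y t1 t2 t3.
Proof.
move=> b1 b2 b3.
under eq_bigr => k _ do under eq_bigr => l _ do rewrite -!mulr_sumr -mulr_suml sumdelta // mul1r.
under eq_bigr => k _ do rewrite -mulr_sumr -mulr_suml sumdelta // mul1r.
by rewrite -mulr_suml sumdelta // mul1r.
Qed.

Lemma swap3 (I J K X : finType) (F : I -> J -> K -> X -> C) (H : I -> J -> K -> C) :
  \sum_i \sum_j \sum_k (\sum_x F i j k x) * H i j k =
  \sum_x \sum_i \sum_j \sum_k F i j k x * H i j k.
Proof.
under eq_bigr => i _ do under eq_bigr => j _ do under eq_bigr => k _ do rewrite mulr_suml.
under eq_bigr => i _ do under eq_bigr => j _ do rewrite exchange_big.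
under eq_bigr => i _ do rewrite exchange_big.
by rewrite exchange_big.
Qed.

Section S2.
Variables N1 N2 N3 : nat.
Local Notation S := (Sidx N1 N2 N3).

Lemma normF2 (q : S -> C) a b c : `|Fpoly q a b c| ^+ 2 =
  \sum_x \sum_y q x * Num.conj (q y) * chi3 (diffk x y) a b c.
Proof.
rewrite normCK /Fpoly rmorph_sum mulr_suml; apply: eq_bigr => x _.
rewrite mulr_sumr; apply: eq_bigr => y _.
rewrite rmorphM /chi3 /diffk /= -chiMJ; ring.
Qed.

Lemma bnd (i j n : nat) : (i < n.+1)%N -> (j < n.+1)%N ->
  (- (n%:Z) <= i%:Z - j%:Z <= n%:Z)%R.
Proof. move=> hi hj. apply/andP; split; lia. Qed.

Lemma diff_bounds (x y : S) :
  [/\ (- (N1%:Z) <= (diffk x y).1.1 <= N1%:Z)%R,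
      (- (N2%:Z) <= (diffk x y).1.2 <= N2%:Z)%R &
      (- (N3%:Z) <= (diffk x y).2 <= N3%:Z)%R].
Proof. by split; apply: bnd. Qed.

Lemma sigma_gram (M : S -> S -> C) (f : trigfun R) :
  (forall a b c, f a b c = \sum_x \sum_y M x y * chi3 (diffk x y) a b c) ->
  (forall a b c, 0 <= f a b c) -> sigmaN N1 N2 N3 f.
Proof.
move=> hf h0; split=> //.
exists (fun k l m => \sum_(p : S * S) (if diffk p.1 p.2 == (k, l, m) then M p.1 p.2 else 0)).
move=> a b c; rewrite hf pair_big /= swap3; apply: eq_bigr => -[x y] _ /=.
have [b1 b2 b3] := diff_bounds x y.
move: b1 b2 b3; rewrite /diffk /= => b1 b2 b3.
under eq_bigr => k _ do under eq_bigr => l _ do under eq_bigr => m _ do rewrite term_delta.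
by rewrite (tri_delta (fun t1 t2 t3 => M x y * chi t1 t2 t3 a b c)).
Qed.

End S2.
Lemma quad0 (al bb : R) : 0 <= bb -> (forall r, 0 <= r * al + r * r * bb) -> al = 0.
Proof.
move=> hb H.
have hd : bb + 1 != 0 by rewrite gt_eqF //; lra.
set r := - al / (bb + 1).
have e : r * (bb + 1) = - al by rewrite /r divfK.
have hal : al = - (r * (bb + 1)) by rewrite e opprK.
have h : r * r <= 0.
  have := H r; rewrite hal (_ : r * - (r * (bb + 1)) + r * r * bb = - (r * r)); last by ring.
  by rewrite oppr_ge0.
have r0 : r = 0.
  have h2 : r * r = 0 by apply/le_anti; rewrite h /=; nra.
  by move/eqP: h2; rewrite mulf_eq0 orbb => /eqP.
by rewrite hal r0 mul0r oppr0.
Qed.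

Lemma psd_alg (z1 z2 bb : C) : 0 <= bb ->
  (forall t, 0 <= Num.conj t * z1 + t * z2 + t * Num.conj t * bb) -> z1 = 0.
Proof.
case: z1 => a1 b1; case: z2 => a2 b2; case: bb => bb ib.
rewrite lecE /= => /andP[/eqP ib0 hbb] H.
have Hr r := H (r%:C); have Hi r := H (r%:C * 'i).
move: Hr Hi; rewrite ib0 => Hr Hi.
have P1 r : (r * b1 + r * b2 == 0) && (0 <= r * a1 + r * a2 + r * r * bb).
  by have := Hr r; rewrite !conjE !lecE /=; simpc.
have P2 r : (- (r * a1) + r * a2 == 0) && (0 <= r * b1 - r * b2 + r * r * bb).
  by have := Hi r; rewrite !conjE !lecE /=; simpc.
have e1 : a1 + a2 = 0.
  apply: (quad0 hbb) => r; have /andP[_ h] := P1 r; lra.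
have e2 : b1 - b2 = 0.
  apply: (quad0 hbb) => r; have /andP[_ h] := P2 r; lra.
have /andP[/eqP e3 _] := P1 1.
have /andP[/eqP e4 _] := P2 1.
have -> : a1 = 0 by lra.
have -> : b1 = 0 by lra.
by [].
Qed.

Section S3.
Variables (N1 N2 N3 : nat) (Phi : int * int * int -> C).
Local Notation S := (Sidx N1 N2 N3).

Definition qe (e : 'cV[C]_#|S|) : S -> C := fun x => e (enum_rank x) 0.
Definition vq (u : S -> C) : 'cV[C]_#|S| := \col_i u (enum_val i).
Definition Bq (u v : S -> C) := \sum_x \sum_y u x * Num.conj (v y) * Phi (diffk x y).
Definition cs (u : S -> C) (y : S) := \sum_x u x * Phi (diffk x y).

Lemma sum_ev (F : S -> C) : \sum_(i < #|S|) F (enum_val i) = \sum_x F x.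
Proof.
rewrite (reindex (fun i : 'I_#|S| => enum_val i)) //=.
apply: onW_bij; exists enum_rank => x; [exact: enum_valK | exact: enum_rankK].
Qed.

Lemma qe_vq u x : qe (vq u) x = u x.
Proof. by rewrite /qe /vq mxE enum_rankK. Qed.

Lemma Bq_ge0 : PN N1 N2 N3 Phi -> forall u, 0 <= Bq u u.
Proof.
move=> hP u; have := hP #|S| enum_val (fun i => u (enum_val i)).
suff -> : Bq u u = \sum_(i < #|S|) \sum_(j < #|S|) u (enum_val i) * Num.conj (u (enum_val j))
   * Phi (diffk (enum_val i) (enum_val j)) by [].
rewrite /Bq -sum_ev; apply: eq_bigr => i _; by rewrite -sum_ev.
Qed.

Lemma Ae_cs e i : (Amx N1 N2 N3 Phi *m e) i 0 = cs (qe e) (enum_val i).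
Proof.
rewrite !mxE /cs -sum_ev.
by apply: eq_bigr => j _; rewrite !mxE /qe enum_valK mulrC.
Qed.

Lemma cs_ker e : in_kerA Phi e <-> forall y, cs (qe e) y = 0.
Proof.
split.
- by move=> H y; rewrite -(enum_rankK y) -Ae_cs H mxE.
- by move=> H; apply/matrixP => i j; rewrite ord1 Ae_cs H mxE.
Qed.

Lemma Bq_cs u v : Bq u v = \sum_y Num.conj (v y) * cs u y.
Proof.
rewrite /Bq exchange_big; apply: eq_bigr => y _; rewrite /cs mulr_sumr.
by apply: eq_bigr => x _; ring.
Qed.

Lemma Bq_expand u v t :
  Bq (fun x => u x + t * v x) (fun x => u x + t * v x) =
  Bq u u + Num.conj t * Bq u v + t * Bq v u + t * Num.conj t * Bq v v.
Proof.
rewrite /Bq.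
transitivity (\sum_x \sum_y (u x * Num.conj (u y) * Phi (diffk x y)
   + Num.conj t * (u x * Num.conj (v y) * Phi (diffk x y))
   + t * (v x * Num.conj (u y) * Phi (diffk x y))
   + t * Num.conj t * (v x * Num.conj (v y) * Phi (diffk x y)))).
  by apply: eq_bigr => x _; apply: eq_bigr => y _; rewrite rmorphD rmorphM /=; ring.
under eq_bigr => x _ do rewrite !big_split /= -!mulr_sumr.
by rewrite !big_split /= -!mulr_sumr.
Qed.

Lemma psd_zero : PN N1 N2 N3 Phi -> forall u, Bq u u = 0 -> forall v, Bq u v = 0.
Proof.
move=> hP u h0 v; apply: (@psd_alg _ (Bq v u) (Bq v v)); first exact: Bq_ge0.
by move=> t; have := Bq_ge0 hP (fun x => u x + t * v x); rewrite Bq_expand h0 add0r.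
Qed.

Lemma ker_of_B0 : PN N1 N2 N3 Phi -> forall u, Bq u u = 0 -> forall y, cs u y = 0.
Proof.
move=> hP u h0 y; have := psd_zero hP h0 (fun x => if x == y then 1 else 0).
rewrite Bq_cs (bigD1 y) //= eqxx rmorph1 mul1r big1 ?addr0 // => z /negbTE ->.
by rewrite rmorph0 mul0r.
Qed.

Lemma B0_of_ker e : in_kerA Phi e -> forall v, Bq (qe e) v = 0.
Proof.
move=> /cs_ker H v; rewrite Bq_cs big1 // => y _; by rewrite H mulr0.
Qed.

Lemma ker_line (e0 e : 'cV[C]_#|S|) : nuA N1 N2 N3 Phi = 1%N -> e0 != 0 ->
  in_kerA Phi e0 -> in_kerA Phi e -> exists c, e = c *: e0.
Proof.
rewrite /nuA /in_kerA => hr nz h0 h.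
have s0 : (e0^T <= kermx (Amx N1 N2 N3 Phi)^T)%MS by apply/sub_kermxP; rewrite -trmx_mul h0 trmx0.
have s1 : (e^T <= kermx (Amx N1 N2 N3 Phi)^T)%MS by apply/sub_kermxP; rewrite -trmx_mul h trmx0.
have r0 : \rank e0^T = 1%N.
  apply/eqP; rewrite eqn_leq rank_leq_row lt0n mxrank_eq0 trmx_eq0 nz //.
have /andP[_ sK] : (e0^T == kermx (Amx N1 N2 N3 Phi)^T)%MS.
  by rewrite -(mxrank_leqif_eq s0).2 r0 hr.
have /sub_rVP[c hc] := submx_trans s1 sK.
exists c; apply: (can_inj trmxK); by rewrite hc linearZ.
Qed.


Lemma Fpoly_scale (k : C) (U W : S -> C) : (forall x, U x = k * W x) ->
  forall a b c, Fpoly U a b c = k * Fpoly W a b c.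
Proof.
move=> hU a b c; rewrite /Fpoly mulr_sumr; apply: eq_bigr => x _.
by rewrite hU mulrA.
Qed.

Lemma nF_scale (k : C) (U W : S -> C) : (forall x, U x = k * W x) ->
  forall a b c, `|Fpoly U a b c| ^+ 2 = `|k| ^+ 2 * `|Fpoly W a b c| ^+ 2.
Proof. by move=> hU a b c; rewrite (Fpoly_scale hU) normrM exprMn. Qed.

Lemma gram_sum (r : nat) (al : 'I_r -> C) (u : 'I_r -> S -> C) (Psi : S -> S -> C) :
  \sum_x \sum_y (\sum_j al j * (u j x * Num.conj (u j y))) * Psi x y =
  \sum_j al j * \sum_x \sum_y u j x * Num.conj (u j y) * Psi x y.
Proof.
under eq_bigr => x _ do under eq_bigr => y _ do rewrite mulr_suml.
under eq_bigr => x _ do rewrite exchange_big.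
rewrite exchange_big; apply: eq_bigr => j _.
rewrite mulr_sumr; apply: eq_bigr => x _; rewrite mulr_sumr; apply: eq_bigr => y _.
by rewrite !mulrA.
Qed.

Lemma kerq_line (w : 'cV[C]_#|S|) : nuA N1 N2 N3 Phi = 1%N -> w != 0 -> in_kerA Phi w ->
  forall U : S -> C, (forall y, cs U y = 0) -> exists k, forall x, U x = k * qe w x.
Proof.
move=> hnu nz hw U H.
have hk : in_kerA Phi (vq U).
  apply/cs_ker => y; rewrite -[RHS](H y); apply: eq_bigr => x _; by rewrite qe_vq.
have [k hc] := ker_line hnu nz hw hk.
by exists k => x; rewrite -qe_vq hc /qe mxE.
Qed.

Lemma main_lemma : PN N1 N2 N3 Phi -> nuA N1 N2 N3 Phi = 1%N ->
  forall f : trigfun R, DA N1 N2 N3 Phi f -> extremal (@QN R N1 N2 N3) f.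
Proof.
move=> hP hnu f [n [lam [e [hl0 [hl1 [he hf]]]]]].
case: n lam e hl0 hl1 he hf => [|n] lam e hl0 hl1 he hf.
  by move: hl1; rewrite big_ord0 => /esym/eqP; rewrite oner_eq0.
pose w := e ord0.
have [wnz wk] := he ord0.
pose W := qe w.
have Hd : forall i, exists k, forall x, qe (e i) x = k * W x.
  move=> i; have [_ ki] := he i.
  have [k hk] := ker_line hnu wnz wk ki.
  by exists k => x; rewrite /qe hk mxE.
have [d hd] := boolp.choice Hd.
pose kap := \sum_i (lam i)%:C * `|d i| ^+ 2.
have hfk : forall a b c, f a b c = kap * `|Fpoly W a b c| ^+ 2.
  move=> a b c; rewrite hf /kap mulr_suml; apply: eq_bigr => i _.
  by rewrite /Fe (nF_scale (U := qe (e i)) (hd i)) mulrA.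
have kap0 : 0 <= kap.
  by apply: sumr_ge0 => i _; apply: mulr_ge0; [rewrite ler0c | apply: exprn_ge0].
have QNf : QN N1 N2 N3 f.
  split.
  - apply: (@sigma_gram _ _ _ (fun x y => \sum_i (lam i)%:C * (qe (e i) x * Num.conj (qe (e i) y)))).
      move=> a b c; rewrite gram_sum hf; apply: eq_bigr => i _.
      by rewrite /Fe normF2.
    move=> a b c; rewrite hf; apply: sumr_ge0 => i _.
    by apply: mulr_ge0; [rewrite ler0c | apply: exprn_ge0].
  - exists n.+1, (fun j x => (Num.sqrt (lam j))%:C * qe (e j) x) => a b c.
    rewrite hf; apply: eq_bigr => i _.
    rewrite (@nF_scale (Num.sqrt (lam i))%:C (fun x => (Num.sqrt (lam i))%:C * qe (e i) x) (qe (e i))) //.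
    rewrite (@ger0_norm _ (Num.sqrt (lam i))%:C) ?ler0c ?sqrtr_ge0 //; congr (_ * _).
    by rewrite expr2 -rmorphM /= -expr2 sqr_sqrtr.
have one_side : forall g h, QN N1 N2 N3 g -> QN N1 N2 N3 h ->
    (forall a b c, f a b c = g a b c + h a b c) ->
    exists s : R, 0 <= s /\ forall a b c, g a b c = s%:C * f a b c.
  move=> g h [[_ g0] [rg [G hg]]] [[_ h0] [rh [H hh]]] hfgh.
  pose Mt x y := \sum_i (lam i)%:C * (qe (e i) x * Num.conj (qe (e i) y))
     - \sum_j 1 * (G j x * Num.conj (G j y)) - \sum_j 1 * (H j x * Num.conj (H j y)).
  have expand : forall Psi : S -> S -> C, \sum_x \sum_y Mt x y * Psi x y =
     \sum_i (lam i)%:C * (\sum_x \sum_y qe (e i) x * Num.conj (qe (e i) y) * Psi x y)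
     - \sum_j 1 * (\sum_x \sum_y G j x * Num.conj (G j y) * Psi x y)
     - \sum_j 1 * (\sum_x \sum_y H j x * Num.conj (H j y) * Psi x y).
    move=> Psi; rewrite /Mt.
    under eq_bigr => x _ do under eq_bigr => y _ do rewrite !mulrBl.
    under eq_bigr => x _ do rewrite !sumrB.
    by rewrite !sumrB !gram_sum.
  have hz : forall a b c, \sum_(p : S * S) Mt p.1 p.2 * chi3 (diffk p.1 p.2) a b c = 0.
    move=> a b c.
    rewrite -(pair_bigA _ (fun x y => Mt x y * chi3 (diffk x y) a b c)) /= expand.
    transitivity (f a b c - g a b c - h a b c); last by rewrite hfgh; ring.
    rewrite hf hg hh; congr (_ - _ - _); apply: eq_bigr => j _; by rewrite ?mul1r /Fe normF2.
  have hB := indep (cf := fun p : S * S => Mt p.1 p.2) (d := fun p : S * S => diffk p.1 p.2) hz Phi.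
  move: hB; rewrite -(pair_bigA _ (fun x y => Mt x y * Phi (diffk x y))) /= expand.
  rewrite big1 ?sub0r; last first.
    move=> i _; have [_ ki] := he i; have := B0_of_ker ki (qe (e i)).
    by rewrite /Bq => ->; rewrite mulr0.
  set A := \sum_j _; set B := \sum_j _ => hAB.
  have A0 : 0 <= A.
    by apply: sumr_ge0 => j _; rewrite mul1r; exact: (Bq_ge0 hP (G j)).
  have B0 : 0 <= B.
    by apply: sumr_ge0 => j _; rewrite mul1r; exact: (Bq_ge0 hP (H j)).
  have hAB' : A + B = 0 by apply/eqP; rewrite -oppr_eq0 opprD; apply/eqP.
  have /andP[/eqP Az _] : (A == 0) && (B == 0) by rewrite -paddr_eq0 // hAB'.
  have Gz : forall j, Bq (G j) (G j) = 0.
    have Fge : forall j : 'I_rg, true -> 0 <= 1 * Bq (G j) (G j).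
      by move=> j _; rewrite mul1r; exact: (Bq_ge0 hP (G j)).
    move=> j; rewrite -[LHS]mul1r; exact: (psumr_eq0P Fge Az isT).
  have Hc : forall j, exists k, forall x, G j x = k * W x.
    move=> j; exact: (kerq_line hnu wnz wk (ker_of_B0 hP (Gz j))).
  have [cc hc] := boolp.choice Hc.
  pose sig := \sum_j `|cc j| ^+ 2.
  have hgs : forall a b c, g a b c = sig * `|Fpoly W a b c| ^+ 2.
    move=> a b c; rewrite hg /sig mulr_suml; apply: eq_bigr => j _.
    by rewrite (nF_scale (hc j)).
  have [k0|knz] := eqVneq kap 0.
  - exists 0; split => // a b c; rewrite mul0r.
    have : g a b c + h a b c == 0 by rewrite -hfgh hfk k0 mul0r.
    by rewrite paddr_eq0 // => /andP[/eqP -> _].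
  - have sig0 : 0 <= sig by apply: sumr_ge0 => j _; apply: exprn_ge0.
    have z0 : 0 <= sig / kap by apply: divr_ge0.
    have hre : (complex.Re (sig / kap))%:C = sig / kap := RRe_real (ger0_real z0).
    exists (complex.Re (sig / kap)); split; first by rewrite -ler0c hre.
    by move=> a b c; rewrite hre hfk hgs mulrA divfK.
split => // g h QNg QNh hgh; split; first exact: one_side QNg QNh hgh.
by apply: one_side QNh QNg _ => a b c; rewrite addrC; exact: hgh.
Qed.

End S3.
End S.

Theorem corollary2 (R : realType) (N1 N2 N3 : nat)
    (Phi : int * int * int -> R[i]) :
  PN N1 N2 N3 Phi ->
  nuA N1 N2 N3 Phi = 1%N ->
  forall f : trigfun R, DA N1 N2 N3 Phi f -> extremal (@QN R N1 N2 N3) f.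
Proof. exact: main_lemma. Qed.
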